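(* Let $\sum_{\mathbf n\in\mathbb N_0^d}a_{\mathbf n}$ be a $d$-fold numerical series ($a_{\mathbf n}\in\mathbb C$) such that every $\mathbf n$ with $a_{\mathbf n}\neq0$ lies in $\{\mathbf 0\}\cup\bigcup_{k\in\mathbb N_0}B_k$, where $B_k=\{\mathbf n\in\mathbb N_0^d: 2^k\mathbf 1\le\mathbf n<2^{k+1}\mathbf 1\}$, and suppose the series converges by rectangles to $S$, i.e. $\sum_{\mathbf n<\mathbf N}a_{\mathbf n}\to S$ as $\min_jN^j\to\infty$. Then for every permutation $(j_1,\dots,j_d)$ of $(1,\dots,d)$ the iterated sum $\sum_{n^{j_1}\in\mathbb N_0}\big(\sum_{n^{j_2}\in\mathbb N_0}\big(\cdots\big(\sum_{n^{j_d}\in\mathbb N_0}a_{n^1,\dots,n^d}\big)\cdots\big)\big)$ exists and equals $S$.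
   Context: $d\ge2$ is an integer. Vectors in $\mathbb N_0^d$ are compared coordinatewise ($\mathbf a<\mathbf b$ iff $a^j<b^j$ for all $j$), $\mathbf 0=(0,\dots,0)$, $\mathbf 1=(1,\dots,1)$. *)

(* Defs.v *)
From HB Require Import structures.
From mathcomp Require Import all_boot all_order all_algebra all_fingroup.
From mathcomp Require Import complex.
From mathcomp Require Import all_classical all_reals all_analysis.
Set Implicit Arguments. Unset Strict Implicit. Unset Printing Implicit Defensive.
Import Order.TTheory GRing.Theory Num.Theory.
Import numFieldNormedType.Exports.
Local Open Scope classical_set_scope.
Local Open Scope ring_scope.

Definition upd (d : nat) (x : 'I_d -> nat) (j : 'I_d) (m : nat) : 'I_d -> nat :=
  fun i => if i == j then m else x i.

(* rect_sum l N a x : sum of a over the coordinates in l ranging over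
   0 <= n^j < N^j, the other coordinates being fixed to those of x. *)
Fixpoint rect_sum (d : nat) (K : numFieldType) (l : seq 'I_d) (N : 'I_d -> nat)
    (a : ('I_d -> nat) -> K) (x : 'I_d -> nat) : K :=
  match l with
  | [::] => a x
  | j :: l' => \sum_(m < N j) rect_sum l' N a (upd x j m)
  end.

Definition rect_partial_sum (d : nat) (K : numFieldType) (a : ('I_d -> nat) -> K)
    (N : 'I_d -> nat) : K :=
  rect_sum (enum 'I_d) N a (fun _ => 0%N).

Definition rect_converges (d : nat) (K : numFieldType) (a : ('I_d -> nat) -> K)
    (S : K) : Prop :=
  forall e : K, 0 < e -> exists M : nat, forall N : 'I_d -> nat,
    (forall j, (M <= N j)%N) -> `|rect_partial_sum a N - S| < e.

(* iter_sum_is l a x s : the iterated sum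
   sum_{n^{j1}} ( sum_{n^{j2}} ( ... sum_{n^{jk}} a_n ) ), l = [:: j1; ...; jk],
   (other coordinates fixed to those of x) exists and equals s:
   every inner iterated series converges and the outer series converges to s. *)
Fixpoint iter_sum_is (d : nat) (K : numFieldType) (l : seq 'I_d)
    (a : ('I_d -> nat) -> K) (x : 'I_d -> nat) (s : K) : Prop :=
  match l with
  | [::] => a x = s
  | j :: l' => exists g : nat -> K,
      (forall m, iter_sum_is l' a (upd x j m) (g m)) /\ series g @ \oo --> s
  end.

Definition in_block (d : nat) (k : nat) (n : 'I_d -> nat) : Prop :=
  forall j, (2 ^ k <= n j < 2 ^ k.+1)%N.

(* Main.v *)
Require Import Defs.
From HB Require Import structures.
From mathcomp Require Import all_boot all_order all_algebra all_fingroup.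
From mathcomp Require Import complex.
From mathcomp Require Import all_classical all_reals all_analysis.
From mathcomp Require Import zify.
Import Order.TTheory GRing.Theory Num.Theory.
Import numFieldNormedType.Exports.
Local Open Scope classical_set_scope.
Local Open Scope ring_scope.
Local Open Scope complex_scope.

Set Implicit Arguments.
Section Aux.
Variables (d : nat) (K : numFieldType).
Implicit Types (l : seq 'I_d) (N : 'I_d -> nat) (a : ('I_d -> nat) -> K)
  (x : 'I_d -> nat).

Definition supp l N a x := forall y : 'I_d -> nat,
  (forall i, i \notin l -> y i = x i) -> a y != 0 ->
  forall j, j \in l -> (y j < N j)%N.

Lemma rect_sum_zero l N a x :
  (forall y : 'I_d -> nat, (forall i, i \notin l -> y i = x i) ->
     (forall j, j \in l -> (y j < N j)%N) -> a y = 0) ->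
  rect_sum l N a x = 0.
Proof.
elim: l x => [|j l IH] x H /=.
  by apply: H.
apply: big1 => m _; apply: IH => y Hy Hb; apply: H.
  move=> i; rewrite in_cons negb_or => /andP[hij hil].
  by rewrite Hy // /upd (negbTE hij).
move=> i; rewrite in_cons => /orP[/eqP->|hil]; last exact: Hb.
case: (boolP (j \in l)) => hjl; first exact: Hb.
by rewrite Hy // /upd eqxx.
Qed.

Lemma supp_cons j l N a x m : supp (j :: l) N a x -> supp l N a (upd x j m).
Proof.
move=> H y hy hay k hk; apply: (H y) => //; last by rewrite in_cons hk orbT.
move=> i; rewrite in_cons negb_or => /andP[hij hil].
by rewrite hy // /upd (negbTE hij).
Qed.

Lemma tail_zero j l N N' a x m : j \notin l -> supp (j :: l) N a x ->
  (N j <= m)%N -> rect_sum l N' a (upd x j m) = 0.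
Proof.
move=> hjl H hm; apply: rect_sum_zero => y hy _.
case: (eqVneq (a y) 0) => // hay.
have hy' : forall i, i \notin j :: l -> y i = x i.
  move=> i; rewrite in_cons negb_or => /andP[hij hil].
  by rewrite hy // /upd (negbTE hij).
have := H y hy' hay j (mem_head _ _).
have -> : y j = m by rewrite hy // /upd eqxx.
by rewrite ltnNge hm.
Qed.

Lemma sum_tail (F : nat -> K) n0 n : (forall m, (n0 <= m)%N -> F m = 0) ->
  (n0 <= n)%N -> \sum_(0 <= m < n) F m = \sum_(0 <= m < n0) F m.
Proof.
move=> HF hn; rewrite (big_cat_nat (leq0n n0) hn) /=.
rewrite [X in _ + X]big1_seq ?addr0 // => m /andP[_].
by rewrite mem_index_iota => /andP[h _]; exact: HF.
Qed.

Lemma box_indep l N N' a x : uniq l -> supp l N a x ->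
  (forall j, j \in l -> (N j <= N' j)%N) ->
  rect_sum l N' a x = rect_sum l N a x.
Proof.
elim: l x => [|j l IH] x //= /andP[hjl hu] hs hN.
transitivity (\sum_(m < N' j) rect_sum l N a (upd x j m)).
  apply: eq_bigr => m _; apply: IH => //; first exact: supp_cons.
  by move=> k hk; apply: hN; rewrite in_cons hk orbT.
rewrite -(big_mkord xpredT (fun m => rect_sum l N a (upd x j m))).
rewrite -(big_mkord xpredT (fun m => rect_sum l N a (upd x j m))).
apply: sum_tail; last by apply: hN; exact: mem_head.
by move=> m hm; apply: tail_zero hs hm.
Qed.

Lemma iter_finite l N a x : uniq l -> supp l N a x ->
  iter_sum_is l a x (rect_sum l N a x).
Proof.
elim: l x => [|j l IH] x //= /andP[hjl hu] hs.
exists (fun m => rect_sum l N a (upd x j m)); split.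
  by move=> m; apply: IH => //; exact: supp_cons.
apply: cvg_near_cst.
apply: filterS (nbhs_infty_ge (N j)) => n hn.
rewrite /series /=.
rewrite (@sum_tail _ (N j) n) //; first by rewrite big_mkord.
by move=> m hm; apply: tail_zero hs hm.
Qed.

Lemma swap_rect i j l N a x : i != j ->
  rect_sum [:: i, j & l] N a x = rect_sum [:: j, i & l] N a x.
Proof.
move=> hij /=; rewrite exchange_big /=.
apply: eq_bigr => m' _; apply: eq_bigr => m _; congr rect_sum.
apply/funext => k; rewrite /upd.
case: (eqVneq k j) => [->|//]; by rewrite eq_sym (negbTE hij).
Qed.

Lemma move_front j p q N a x : j \notin p ->
  rect_sum (p ++ j :: q) N a x = rect_sum (j :: p ++ q) N a x.
Proof.
elim: p x => [|i p IH] x //.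
rewrite in_cons negb_or => /andP[hji hjp].
transitivity (rect_sum [:: i, j & p ++ q] N a x).
  by rewrite /=; apply: eq_bigr => m _; exact: IH.
by apply: swap_rect; rewrite eq_sym.
Qed.

Lemma perm_rect l1 l2 N a : uniq l1 -> perm_eq l1 l2 ->
  forall x, rect_sum l1 N a x = rect_sum l2 N a x.
Proof.
elim: l1 l2 => [|j l1 IH] l2 hu hp x.
  by have := perm_size hp; case: l2 hp.
have u2 : uniq l2 by rewrite -(perm_uniq hp).
have hj2 : j \in l2 by rewrite -(perm_mem hp) mem_head.
case/splitPr: hj2 hp u2 => p q hp u2.
move/andP: hu => [hj1 hu1].
have h2 : perm_eq (j :: l1) (j :: (p ++ q)).
  apply: perm_trans hp _; exact: (permEl (perm_catCA p [:: j] q)).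
rewrite perm_cons in h2.
have hjp : j \notin p.
  move: u2; rewrite cat_uniq => /and3P[_ + _].
  by apply: contra => hjp; apply/hasP; exists j => //; exact: mem_head.
rewrite move_front //= ; apply: eq_bigr => m _; exact: IH.
Qed.

End Aux.
Arguments supp {d K} l N a x.
Unset Implicit Arguments.

Theorem proposition1 (R : realType) (d : nat) (hd : (2 <= d)%N)
    (a : ('I_d -> nat) -> R[i]) (S : R[i])
    (hsupp : forall n : 'I_d -> nat, a n != 0 ->
       (forall j, n j = 0%N) \/ exists k : nat, in_block k n)
    (hconv : rect_converges a S) :
  forall sigma : 'S_d,
    iter_sum_is [seq sigma i | i <- enum 'I_d] a (fun _ => 0%N) S.
Proof.
move=> sigma.
have d0 : (0 < d)%N by apply: leq_trans hd.
have lu : uniq [seq sigma i | i <- enum 'I_d].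
  by rewrite map_inj_uniq ?enum_uniq //; exact: perm_inj.
have lall : forall i, i \in [seq sigma i | i <- enum 'I_d].
  by move=> i; rewrite -{1}(permKV sigma i) map_f // mem_enum.
have lperm : perm_eq [seq sigma i | i <- enum 'I_d] (enum 'I_d).
  by apply: uniq_perm lu (enum_uniq _) _ => i; rewrite lall mem_enum.
move: lu lall lperm; case: [seq sigma i | i <- enum 'I_d] => [|j0 l'] lu lall lperm.
  by have := lall (Ordinal d0); rewrite in_nil.
move/andP: (lu) => [hj0 lu'].
have hs : forall (m : nat) (Nm : 'I_d -> nat),
    (forall j, j \in l' -> (2 * m).+1 <= Nm j)%N ->
    supp l' Nm a (upd (fun _ => 0%N) j0 m).
  move=> m Nm hNm y hy hay j hj.
  apply: leq_trans (hNm j hj).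
  have yj0 : y j0 = m by rewrite hy // /upd eqxx.
  case: (hsupp y hay) => [hz|[k hk]]; first by rewrite hz.
  have := hk j0; have := hk j; rewrite yj0 => /andP[_ h1] /andP[h2 _].
  rewrite expnS in h1; move: h1 h2; set t := (2 ^ k)%N; lia.
exists (fun m => rect_sum l' (fun _ => (2 * m).+1)%N a (upd (fun _ => 0%N) j0 m)).
split.
  by move=> m; apply: iter_finite => //; apply: hs.
apply/cvgrPdist_lt => e he.
have [M0 HM] := hconv e he.
apply: filterS (nbhs_infty_ge M0) => M hM.
have -> : series (fun m => rect_sum l' (fun _ => (2 * m).+1)%N a
                   (upd (fun _ => 0%N) j0 m)) M =
          rect_partial_sum a (fun j => if j == j0 then M else (2 * M)%N).
  rewrite /rect_partial_sum -(@perm_rect _ _ _ _ _ a lu lperm) /= eqxx /series /=.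
  rewrite big_mkord; apply: eq_bigr => m _.
  symmetry; apply: box_indep => //; first by apply: hs => j hj /=.
  move=> j hj; have -> : (j == j0) = false.
    by apply/negbTE; apply: contraNneq hj0 => <-.
  have := ltn_ord m; lia.
rewrite distrC; apply: HM => j; case: (j == j0); lia.
Qed.
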